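(* Let $K$ be an algebraically closed field of characteristic $p\ge5$, $f\in K[[x,y,z]]$, $a\in K$ with $a^3+27\ne0$, and suppose $j^3f=x^3+y^3+z^3+axyz$ (in particular $j^2f=0$). Then $f\in P_8$, i.e. $f$ is right equivalent to $x^3+y^3+z^3+a'xyz$ for some $a'\in K$.
   Context: $j^3f$ is the image of $f$ in $\mathfrak m/\mathfrak m^4$ (the terms of $f$ of degree $\le3$). Right equivalence: $g=\Phi(f)$ for a $K$-algebra automorphism $\Phi$ of $K[[x,y,z]]$. *)

(* Defs.v *)
From HB Require Import structures.
From mathcomp Require Import all_boot all_order all_algebra all_field.
Set Implicit Arguments. Unset Strict Implicit. Unset Printing Implicit Defensive.
Import Order.TTheory GRing.Theory Num.Theory.
Local Open Scope ring_scope.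

(* Formal power series in three variables x,y,z over K:
   f i j k = coefficient of x^i y^j z^k. *)
Definition ps3 (K : fieldType) := nat -> nat -> nat -> K.

Definition ps3_zero (K : fieldType) : ps3 K := fun _ _ _ => 0.
Definition ps3_one (K : fieldType) : ps3 K :=
  fun i j k => if [&& i == 0%N, j == 0%N & k == 0%N] then 1 else 0.
Definition ps3_add (K : fieldType) (f g : ps3 K) : ps3 K :=
  fun i j k => f i j k + g i j k.
Definition ps3_scale (K : fieldType) (c : K) (f : ps3 K) : ps3 K :=
  fun i j k => c * f i j k.
Definition ps3_mul (K : fieldType) (f g : ps3 K) : ps3 K :=
  fun i j k => \sum_(a < i.+1) \sum_(b < j.+1) \sum_(c < k.+1)
                 f a b c * g (i - a)%N (j - b)%N (k - c)%N.

Definition is_alg_aut3 (K : fieldType) (Phi : ps3 K -> ps3 K) : Prop :=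
  [/\ forall f g, Phi (ps3_add f g) = ps3_add (Phi f) (Phi g),
      forall f g, Phi (ps3_mul f g) = ps3_mul (Phi f) (Phi g),
      Phi (ps3_one K) = ps3_one K,
      forall (c : K) f, Phi (ps3_scale c f) = ps3_scale c (Phi f)
    & bijective Phi].

Definition hesse_cubic (K : fieldType) (a : K) : ps3 K :=
  fun i j k =>
    if [&& i == 3%N, j == 0%N & k == 0%N] then 1
    else if [&& i == 0%N, j == 3%N & k == 0%N] then 1
    else if [&& i == 0%N, j == 0%N & k == 3%N] then 1
    else if [&& i == 1%N, j == 1%N & k == 1%N] then a
    else 0.

Definition jet3_eq (K : fieldType) (f g : ps3 K) : Prop :=
  forall i j k, (i + j + k <= 3)%N -> f i j k = g i j k.

(* Main.v *)
Require Import Defs.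
From HB Require Import structures.
From mathcomp Require Import all_boot all_order all_algebra all_field.
From mathcomp Require Import boolp zify ring lra.
Import GRing.Theory.
Local Open Scope ring_scope.

Set Implicit Arguments. Unset Strict Implicit. Unset Printing Implicit Defensive.

Section Ring3.
Variable K : fieldType.

Definition R3 : Type := ps3 K.
HB.instance Definition _ := gen_eqMixin R3.
HB.instance Definition _ := gen_choiceMixin R3.

Definition ps3_opp (f : R3) : R3 := fun i j k => - f i j k.

Lemma p3addA : associative (@ps3_add K).
Proof. by move=> f g h; apply/funext=> i; apply/funext=> j; apply/funext=> k; rewrite /ps3_add addrA. Qed.
Lemma p3addC : commutative (@ps3_add K).
Proof. by move=> f g; apply/funext=> i; apply/funext=> j; apply/funext=> k; rewrite /ps3_add addrC. Qed.
Lemma p3add0 : left_id (ps3_zero K) (@ps3_add K).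
Proof. by move=> f; apply/funext=> i; apply/funext=> j; apply/funext=> k; rewrite /ps3_add /ps3_zero add0r. Qed.
Lemma p3addN : left_inverse (ps3_zero K) ps3_opp (@ps3_add K).
Proof. by move=> f; apply/funext=> i; apply/funext=> j; apply/funext=> k; rewrite /ps3_add /ps3_zero /ps3_opp addNr. Qed.

HB.instance Definition _ := GRing.isZmodule.Build R3 p3addA p3addC p3add0 p3addN.

Definition c3 (p : {poly {poly {poly K}}}) i j k := ((p`_i)`_j)`_k.
Definition T3 N (f : R3) : {poly {poly {poly K}}} :=
  \poly_(i < N) \poly_(j < N) \poly_(k < N) f i j k.

Lemma c3T N f i j k : c3 (T3 N f) i j k =
   if [&& i < N, j < N & k < N]%N then f i j k else 0.
Proof.
rewrite /c3 /T3 coef_poly; case: ltnP => //= _; last by rewrite !coef0.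
rewrite coef_poly; case: ltnP => //= _; last by rewrite !coef0.
by rewrite coef_poly.
Qed.

Lemma c3M p q i j k : c3 (p * q) i j k =
  \sum_(a < i.+1) \sum_(b < j.+1) \sum_(c < k.+1)
     c3 p a b c * c3 q (i - a)%N (j - b)%N (k - c)%N.
Proof.
rewrite /c3 coefM !coef_sum; apply: eq_bigr => a _.
rewrite coefM coef_sum; apply: eq_bigr => b _.
by rewrite coefM.
Qed.

Lemma mulE (f g : R3) p q i j k :
  (forall a b c, (a <= i)%N -> (b <= j)%N -> (c <= k)%N -> f a b c = c3 p a b c) ->
  (forall a b c, (a <= i)%N -> (b <= j)%N -> (c <= k)%N -> g a b c = c3 q a b c) ->
  ps3_mul f g i j k = c3 (p * q) i j k.
Proof.
move=> Hf Hg; rewrite c3M /ps3_mul; apply: eq_bigr => [[a /= Ha]] _.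
apply: eq_bigr => [[b /= Hb]] _; apply: eq_bigr => [[c /= Hc]] _.
by rewrite Hf // Hg // leq_subr.
Qed.

Lemma mulT (f g : R3) N i j k : (i < N)%N -> (j < N)%N -> (k < N)%N ->
  ps3_mul f g i j k = c3 (T3 N f * T3 N g) i j k.
Proof.
move=> Hi Hj Hk; apply: mulE => a b c Ha Hb Hc; rewrite c3T.
all: by rewrite (leq_ltn_trans Ha) // (leq_ltn_trans Hb) // (leq_ltn_trans Hc).
Qed.

Lemma ps3_ext (f g : R3) : (forall i j k, f i j k = g i j k) -> f = g.
Proof. by move=> H; apply/funext=> i; apply/funext=> j; apply/funext=> k. Qed.

Lemma p3mulA : associative (@ps3_mul K).
Proof.
move=> f g h; apply: ps3_ext => i j k; set N := (i + j + k).+1.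
have Hi : (i < N)%N by rewrite /N ltnS -addnA leq_addr.
have Hj : (j < N)%N by rewrite /N ltnS addnAC leq_addl.
have Hk : (k < N)%N by rewrite /N ltnS leq_addl.
transitivity (c3 (T3 N f * (T3 N g * T3 N h)) i j k).
  apply: mulE => a b c Ha Hb Hc.
    by rewrite c3T (leq_ltn_trans Ha) // (leq_ltn_trans Hb) // (leq_ltn_trans Hc).
  by apply: mulT; [apply: leq_ltn_trans Hi|apply: leq_ltn_trans Hj|apply: leq_ltn_trans Hk].
rewrite mulrA; symmetry; apply: mulE => a b c Ha Hb Hc.
  by apply: mulT; [apply: leq_ltn_trans Hi|apply: leq_ltn_trans Hj|apply: leq_ltn_trans Hk].
by rewrite c3T (leq_ltn_trans Ha) // (leq_ltn_trans Hb) // (leq_ltn_trans Hc).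
Qed.

Lemma bnd i j k : let N := (i + j + k).+1 in [/\ (i < N)%N, (j < N)%N & (k < N)%N].
Proof. by rewrite /= !ltnS; split; lia. Qed.

Lemma p3mulC : commutative (@ps3_mul K).
Proof.
move=> f g; apply: ps3_ext => i j k; have [Hi Hj Hk] := bnd i j k.
by rewrite !(mulT _ _ Hi Hj Hk) mulrC.
Qed.

Lemma p3mul1 : left_id (ps3_one K) (@ps3_mul K).
Proof.
move=> f; apply: ps3_ext => i j k; have [Hi Hj Hk] := bnd i j k.
rewrite (mulT _ _ Hi Hj Hk).
have -> : T3 (i + j + k).+1 (ps3_one K) = 1.
  apply/polyP => a; apply/polyP => b; apply/polyP => c.
  have := c3T (i + j + k).+1 (ps3_one K) a b c; rewrite /c3 => ->.
  rewrite /ps3_one; case: a=>[|a]; case: b=>[|b]; case: c => [|c];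
  by rewrite /= !(coefC, coef0) /=; try case: ifP.
by rewrite mul1r c3T Hi Hj Hk.
Qed.

Lemma p3mulD : left_distributive (@ps3_mul K) (@ps3_add K).
Proof.
move=> f g h; apply: ps3_ext => i j k; have [Hi Hj Hk] := bnd i j k.
rewrite /ps3_add !(mulT _ _ Hi Hj Hk) -/(ps3_add f g).
have -> : T3 (i + j + k).+1 (ps3_add f g) = T3 (i + j + k).+1 f + T3 (i + j + k).+1 g.
  apply/polyP => a; apply/polyP => b; apply/polyP => c.
  have := c3T (i + j + k).+1 (ps3_add f g) a b c; rewrite /c3 => ->.
  rewrite !coefD.
  have := c3T (i + j + k).+1 f a b c; rewrite /c3 => ->.
  have := c3T (i + j + k).+1 g a b c; rewrite /c3 => ->.
  by case: ifP; rewrite ?addr0.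
by rewrite mulrDl /c3 !coefD.
Qed.

Lemma p3one0 : ps3_one K != 0 :> R3.
Proof.
apply/eqP => /(congr1 (fun f : R3 => f 0%N 0%N 0%N)).
by rewrite /ps3_one /= => /eqP; rewrite oner_eq0.
Qed.

HB.instance Definition _ := GRing.Zmodule_isComNzRing.Build R3 p3mulA p3mulC p3mul1 p3mulD p3one0.

Lemma addE (f g : R3) i j k : (f + g) i j k = f i j k + g i j k. Proof. by []. Qed.
Lemma oppE (f : R3) i j k : (- f) i j k = - f i j k. Proof. by []. Qed.
Lemma zeroE i j k : (0 : R3) i j k = 0. Proof. by []. Qed.
Lemma subE (f g : R3) i j k : (f - g) i j k = f i j k - g i j k. Proof. by []. Qed.
Lemma mulE' (f g : R3) : f * g = ps3_mul f g. Proof. by []. Qed.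
Lemma oneE : (1 : R3) = ps3_one K. Proof. by []. Qed.

End Ring3.

Lemma sum_ord_delta n (a : nat) (V : nzRingType) (F : nat -> V) :
  \sum_(x < n) ((x : nat) == a)%:R * F x = if (a < n)%N then F a else 0.
Proof.
case: ltnP => H.
  rewrite (bigD1 (Ordinal H)) //= eqxx mul1r big1 ?addr0 // => i Hi.
  suff -> : (nat_of_ord i == a) = false by rewrite mul0r.
  by apply/negbTE; apply: contra Hi => /eqP Hia; apply/eqP/val_inj.
rewrite big1 // => i _; suff -> : (nat_of_ord i == a) = false by rewrite mul0r.
by apply/negbTE; apply: contraTneq (ltn_ord i) => ->; rewrite -leqNgt.
Qed.

Lemma sum3_delta (i j k a b c : nat) (V : nzRingType) (F : nat -> nat -> nat -> V) :
  \sum_(x < i.+1) \sum_(y < j.+1) \sum_(z < k.+1)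
     [&& (x : nat) == a, (y : nat) == b & (z : nat) == c]%:R * F x y z
  = if [&& (a <= i)%N, (b <= j)%N & (c <= k)%N] then F a b c else 0.
Proof.
have E : forall (x y z : nat), [&& x == a, y == b & z == c]%:R * F x y z
   = (x == a)%:R * ((y == b)%:R * ((z == c)%:R * F x y z)) :> V.
  by move=> x y z; case: (x == a); case: (y == b); case: (z == c);
     rewrite /= ?mul1r ?mul0r.
transitivity (\sum_(x < i.+1) ((x : nat) == a)%:R * (\sum_(y < j.+1) ((y : nat) == b)%:R *
     (\sum_(z < k.+1) ((z : nat) == c)%:R * F x y z))).
  apply: eq_bigr => x _; rewrite mulr_sumr; apply: eq_bigr => y _.
  by rewrite mulr_sumr mulr_sumr; apply: eq_bigr => z _; rewrite E.
under eq_bigr => x _ do under eq_bigr => y _ do rewrite (sum_ord_delta _ _ (F x y)).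
under eq_bigr => x _ do rewrite (sum_ord_delta _ _ (fun y => if (c < k.+1)%N then F x y c else 0)).
rewrite (sum_ord_delta _ _ (fun x => if (b < j.+1)%N then if (c < k.+1)%N then F x b c else 0 else 0)) !ltnS.
by case: (a <= i)%N; case: (b <= j)%N; case: (c <= k)%N.
Qed.


Section Mono.
Variable K : fieldType.
Local Notation R := (R3 K).

Definition dmono (u : K) a b c : R := fun i j k => u * [&& i == a, j == b & k == c]%:R.
Definition C (u : K) : R := dmono u 0 0 0.
Definition mono a b c : R := dmono 1 a b c.
Definition X : R := mono 1 0 0.
Definition Y : R := mono 0 1 0.
Definition Z : R := mono 0 0 1.

Lemma dmonoM u a b c (g : R) i j k :
  (dmono u a b c * g) i j k =
  if [&& (a <= i)%N, (b <= j)%N & (c <= k)%N] then u * g (i - a)%N (j - b)%N (k - c)%N else 0.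
Proof.
rewrite mulE' /ps3_mul -(@sum3_delta i j k a b c K (fun x y z => u * g (i - x)%N (j - y)%N (k - z)%N)).
apply: eq_bigr => x _; apply: eq_bigr => y _; apply: eq_bigr => z _.
by rewrite /dmono mulrCA mulrA.
Qed.

Lemma CE u (g : R) i j k : (C u * g) i j k = u * g i j k.
Proof. by rewrite dmonoM /= !subn0. Qed.

Lemma CC u i j k : C u i j k = u * [&& i == 0%N, j == 0%N & k == 0%N]%:R.
Proof. by []. Qed.

Lemma C_scale u (g : R) : C u * g = ps3_scale u g.
Proof. by apply: ps3_ext => i j k; rewrite CE. Qed.

Lemma C1 : C 1 = 1.
Proof. by apply: ps3_ext => i j k; rewrite /C /dmono mul1r oneE /ps3_one; case: ifP. Qed.

Lemma CD u v : C (u + v) = C u + C v.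
Proof. by apply: ps3_ext => i j k; rewrite addE /C /dmono mulrDl. Qed.

Lemma CM u v : C (u * v) = C u * C v.
Proof. by apply: ps3_ext => i j k; rewrite CE /C /dmono mulrA. Qed.

Lemma CN u : C (- u) = - C u.
Proof. by apply: ps3_ext => i j k; rewrite oppE /C /dmono mulNr. Qed.

Lemma C0 : C 0 = 0.
Proof. by apply: ps3_ext => i j k; rewrite /C /dmono mul0r. Qed.

Lemma Cn n : C n%:R = n%:R.
Proof. by elim: n => [|n IH]; rewrite ?C0 // -addn1 !natrD CD IH C1. Qed.

Lemma mono_mul a b c a' b' c' : mono a b c * mono a' b' c' = mono (a + a')%N (b + b')%N (c + c')%N.
Proof.
apply: ps3_ext => i j k; rewrite dmonoM /mono /dmono mul1r.
have H : forall i a a', ((a <= i)%N && (i - a == a')%N) = (i == a + a')%N.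
  move=> i0 a0 a0'; apply/idP/idP.
    by case/andP => H1 /eqP <-; rewrite subnKC.
  by move/eqP ->; rewrite leq_addr addKn eqxx.
rewrite -H -(H j) -(H k).
by case: (a <= i)%N; case: (b <= j)%N; case: (c <= k)%N; rewrite /= ?andbF ?mul1r.
Qed.

Lemma mono000 : mono 0 0 0 = 1.
Proof. by rewrite /mono -/(C 1) C1. Qed.

Lemma monoE a b c : X ^+ a * Y ^+ b * Z ^+ c = mono a b c.
Proof.
have HX : forall n, X ^+ n = mono n 0 0.
  by elim=> [|n IH]; rewrite ?expr0 ?mono000 // exprS IH /X mono_mul.
have HY : forall n, Y ^+ n = mono 0 n 0.
  by elim=> [|n IH]; rewrite ?expr0 ?mono000 // exprS IH /Y mono_mul.
have HZ : forall n, Z ^+ n = mono 0 0 n.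
  by elim=> [|n IH]; rewrite ?expr0 ?mono000 // exprS IH /Z mono_mul.
by rewrite HX HY HZ !mono_mul ?addn0 ?add0n.
Qed.

Lemma coef_sum3 (I : Type) (r : seq I) (P : pred I) (F : I -> R) i j k :
  (\sum_(x <- r | P x) F x) i j k = \sum_(x <- r | P x) F x i j k.
Proof.
by apply: (big_morph (fun g : R => g i j k)) => // u v; rewrite addE.
Qed.

End Mono.

Section Ord.
Variable K : fieldType.
Local Notation R := (R3 K).

Definition ordge (g : R) (n : nat) :=
  forall i j k, (i + j + k < n)%N -> g i j k = 0.

Lemma ordge0 g : ordge g 0. Proof. by []. Qed.
Lemma ordge_zero n : ordge 0 n. Proof. by []. Qed.
Lemma ordgeW g m n : (m <= n)%N -> ordge g n -> ordge g m.
Proof. by move=> Hmn H i j k Hi; apply: H; apply: leq_trans Hmn. Qed.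
Lemma ordgeD f g n : ordge f n -> ordge g n -> ordge (f + g) n.
Proof. by move=> Hf Hg i j k H; rewrite addE Hf // Hg // addr0. Qed.
Lemma ordgeN f n : ordge f n -> ordge (- f) n.
Proof. by move=> Hf i j k H; rewrite oppE Hf // oppr0. Qed.
Lemma ordgeB f g n : ordge f n -> ordge g n -> ordge (f - g) n.
Proof. by move=> Hf Hg; apply: ordgeD => //; apply: ordgeN. Qed.

Lemma ordgeM f g s t : ordge f s -> ordge g t -> ordge (f * g) (s + t).
Proof.
move=> Hf Hg i j k H; rewrite mulE' /ps3_mul.
apply: big1 => [[a Ha]] _; apply: big1 => [[b Hb]] _; apply: big1 => [[c Hc]] _ /=.
case: (ltnP (a + b + c) s) => Hs; first by rewrite Hf // mul0r.
rewrite (Hg (i - a)%N) ?mulr0 //.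
rewrite ltnS in Ha Hb Hc. lia.
Qed.

Lemma ordge_sum (I : Type) (r : seq I) (P : pred I) (F : I -> R) n :
  (forall x, P x -> ordge (F x) n) -> ordge (\sum_(x <- r | P x) F x) n.
Proof.
move=> H; apply: (big_ind (fun g => ordge g n)) => //.
  by move=> u v; apply: ordgeD.
Qed.

Lemma ordgeX g s e : ordge g s -> ordge (g ^+ e) (s * e).
Proof.
move=> H; elim: e => [|e IH]; first by rewrite muln0.
by rewrite exprS mulnS; apply: ordgeM.
Qed.

Lemma ordgeMl f g t : ordge g t -> ordge (f * g) t.
Proof. by move=> H; rewrite -(add0n t); apply: ordgeM. Qed.
Lemma ordgeMr f g t : ordge f t -> ordge (f * g) t.
Proof. by move=> H; rewrite -(addn0 t); apply: ordgeM. Qed.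

Lemma ordge_eq0 g : (forall n, ordge g n) -> g = 0.
Proof.
by move=> H; apply: ps3_ext => i j k; rewrite zeroE (H (i + j + k).+1).
Qed.

Lemma ordge_mono a b c : ordge (mono K a b c) (a + b + c).
Proof.
move=> i j k H; rewrite /mono /dmono mul1r.
case E: [&& _, _ & _] => //; move: E => /and3P [/eqP Ha /eqP Hb /eqP Hc].
by move: H; rewrite Ha Hb Hc ltnn.
Qed.

Lemma ordgeXYZ : [/\ ordge (X K) 1, ordge (Y K) 1 & ordge (Z K) 1].
Proof. by split; apply: ordge_mono. Qed.

Definition tr N (g : R) : R := fun i j k => if (i + j + k <= N)%N then g i j k else 0.
Definition homd N (g : R) : R := fun i j k => if (i + j + k == N)%N then g i j k else 0.
Definition supp N (g : R) :=
  forall i j k, (N < i)%N || (N < j)%N || (N < k)%N -> g i j k = 0.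

Lemma tr_ordge N g : ordge (g - tr N g) N.+1.
Proof. by move=> i j k H; rewrite ltnS in H; rewrite subE /tr H subrr. Qed.

Lemma homd_ordge N g : ordge g N -> ordge (g - homd N g) N.+1.
Proof.
move=> Hg i j k H; rewrite subE /homd; case: eqP => E; first by rewrite subrr.
by rewrite subr0 Hg //; lia.
Qed.
Lemma homd_ordge' N g : ordge (homd N g) N.
Proof. by move=> i j k H; rewrite /homd; case: eqP => // E; rewrite E ltnn in H. Qed.

Lemma supp_tr N g : supp N (tr N g).
Proof. move=> i j k H; rewrite /tr; case: ifP => // H2; exfalso; lia. Qed.
Lemma supp_hom N g : supp N (homd N g).
Proof. move=> i j k H; rewrite /homd; case: eqP => // H2; exfalso; lia. Qed.
Lemma suppW N M g : (N <= M)%N -> supp N g -> supp M g.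
Proof. move=> H Hg i j k Hi; apply: Hg; lia. Qed.
Lemma suppD N f g : supp N f -> supp N g -> supp N (f + g).
Proof. by move=> Hf Hg i j k H; rewrite addE Hf // Hg // addr0. Qed.
Lemma suppN N f : supp N f -> supp N (- f).
Proof. by move=> Hf i j k H; rewrite oppE Hf // oppr0. Qed.
Lemma suppB N f g : supp N f -> supp N g -> supp N (f - g).
Proof. by move=> Hf Hg; apply: suppD => //; apply: suppN. Qed.
Lemma suppM N M f g : supp N f -> supp M g -> supp (N + M) (f * g).
Proof.
move=> Hf Hg i j k H; rewrite mulE' /ps3_mul.
apply: big1 => [[a Ha]] _; apply: big1 => [[b Hb]] _; apply: big1 => [[c Hc]] _ /=.
case: (boolP ((N < a)%N || (N < b)%N || (N < c)%N)) => H1; first by rewrite Hf // mul0r.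
rewrite Hg ?mulr0 //; rewrite ltnS in Ha Hb Hc; lia.
Qed.

End Ord.

Section Subst.
Variable K : fieldType.
Local Notation R := (R3 K).
Local Notation C := (@C K).
Local Notation mono := (@mono K).

Definition box N := ('I_N.+1 * 'I_N.+1 * 'I_N.+1)%type.

Lemma box_sum (V : zmodType) N (F : box N -> V) :
  \sum_(m : box N) F m = \sum_(a < N.+1) \sum_(b < N.+1) \sum_(c < N.+1) F (a, b, c).
Proof.
rewrite (eq_bigr (fun m => F (m.1, m.2))); last by case.
rewrite -(pair_bigA _ (fun ab c => F (ab, c))) /=.
rewrite (eq_bigr (fun ab => \sum_(c < N.+1) F ((ab.1, ab.2), c))); last by case.
by rewrite -(pair_bigA _ (fun a b => \sum_(c < N.+1) F ((a, b), c))).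
Qed.

Definition Mn (p1 p2 p3 : R) a b c := p1 ^+ a * p2 ^+ b * p3 ^+ c.
Definition E p1 p2 p3 N (g : R) :=
  \sum_(m : box N) C (g m.1.1 m.1.2 m.2) * Mn p1 p2 p3 m.1.1 m.1.2 m.2.

Lemma expand N g : supp N g -> g = \sum_(m : box N) C (g m.1.1 m.1.2 m.2) * mono m.1.1 m.1.2 m.2.
Proof.
move=> Hg; apply: ps3_ext => i j k; rewrite coef_sum3 box_sum.
transitivity (\sum_(a < N.+1) \sum_(b < N.+1) \sum_(c < N.+1)
  [&& (a : nat) == i, (b : nat) == j & (c : nat) == k]%:R * g a b c); last first.
  apply: eq_bigr => a _; apply: eq_bigr => b _.
  apply: eq_bigr => c _; rewrite CE /mono /dmono /= mul1r mulrC.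
  by rewrite (eq_sym i) (eq_sym j) (eq_sym k).
rewrite sum3_delta; case: ifP => // H; apply: Hg; lia.
Qed.

Variables p1 p2 p3 : R.

Lemma E_add N f g : E p1 p2 p3 N (f + g) = E p1 p2 p3 N f + E p1 p2 p3 N g.
Proof. by rewrite /E -big_split; apply: eq_bigr => m _; rewrite addE CD mulrDl. Qed.

Lemma E_zero N : E p1 p2 p3 N 0 = 0.
Proof. by rewrite /E big1 // => m _; rewrite zeroE C0 mul0r. Qed.

Lemma E_sum N (I : Type) (r : seq I) (P : pred I) (F : I -> R) :
  E p1 p2 p3 N (\sum_(x <- r | P x) F x) = \sum_(x <- r | P x) E p1 p2 p3 N (F x).
Proof. by apply: (big_morph _ (E_add N) (E_zero N)). Qed.

Lemma E_C N u g : E p1 p2 p3 N (C u * g) = C u * E p1 p2 p3 N g.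
Proof.
by rewrite /E mulr_sumr; apply: eq_bigr => m _; rewrite CE CM mulrA.
Qed.

Lemma E_opp N g : E p1 p2 p3 N (- g) = - E p1 p2 p3 N g.
Proof.
have -> : - g = C (-1) * g by rewrite CN C1 mulN1r.
by rewrite E_C CN C1 mulN1r.
Qed.

Lemma E_sub N f g : E p1 p2 p3 N (f - g) = E p1 p2 p3 N f - E p1 p2 p3 N g.
Proof. by rewrite E_add E_opp. Qed.

Lemma E_mono N a b c : (a <= N)%N -> (b <= N)%N -> (c <= N)%N ->
  E p1 p2 p3 N (mono a b c) = Mn p1 p2 p3 a b c.
Proof.
move=> Ha Hb Hc; rewrite /E box_sum /=.
transitivity (\sum_(x < N.+1) \sum_(y < N.+1) \sum_(z < N.+1)
  [&& (x : nat) == a, (y : nat) == b & (z : nat) == c]%:R * Mn p1 p2 p3 x y z).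
  apply: eq_bigr => x _; apply: eq_bigr => y _; apply: eq_bigr => z _.
  by rewrite /mono /dmono mul1r Cn.
by rewrite sum3_delta Ha Hb Hc.
Qed.

Lemma E_trunc N M g : supp N g -> (N <= M)%N -> E p1 p2 p3 M g = E p1 p2 p3 N g.
Proof.
move=> Hg HNM; rewrite (expand Hg) !E_sum; apply: eq_bigr => [[[x y] z]] _ /=.
have Hx := ltn_ord x; have Hy := ltn_ord y; have Hz := ltn_ord z.
rewrite !E_C !E_mono //; lia.
Qed.

Lemma E_mul N g h : supp N g -> supp N h ->
  E p1 p2 p3 (N + N)%N (g * h) = E p1 p2 p3 N g * E p1 p2 p3 N h.
Proof.
move=> Hg Hh; rewrite {1}(expand Hg) {1}(expand Hh) big_distrlr /= E_sum.
rewrite [E _ _ _ N g]/E [E _ _ _ N h]/E [RHS]big_distrlr /=; apply: eq_bigr => m _; rewrite E_sum; apply: eq_bigr => m' _.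
rewrite mulrACA -CM mulrACA mono_mul E_C E_mono.
- rewrite /Mn !exprD CM.
  have L : forall c d a b e a' b' e' : R,
     c * d * (a * a' * (b * b') * (e * e')) = c * d * (a * b * e * (a' * b' * e')).
    by move=> *; ring.
  by rewrite L.
all: rewrite leq_add // -ltnS; exact: ltn_ord.
Qed.

End Subst.

Section Sigma.
Variable K : fieldType.
Local Notation R := (R3 K).
Local Notation C := (@C K).
Local Notation mono := (@mono K).

Definition subst3 (p1 p2 p3 : R) (g : R) : R :=
  fun i j k => E p1 p2 p3 (i + j + k)%N (tr (i + j + k)%N g) i j k.

Lemma E_ordge (p1 p2 p3 : R) N (g : R) s : ordge p1 1 -> ordge p2 1 -> ordge p3 1 ->
  ordge g s -> ordge (E p1 p2 p3 N g) s.
Proof.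
move=> H1 H2 H3 Hg; apply: ordge_sum => [[[a b] c]] _ /=.
case: (ltnP (a + b + c) s) => Hs.
  by rewrite Hg // C0 mul0r.
apply: ordgeMl; apply: (ordgeW Hs); rewrite /Mn.
have HX : forall (p : R) n, ordge p 1 -> ordge (p ^+ n) n.
  by move=> p n Hp; have := ordgeX (e := n) Hp; rewrite mul1n.
by apply: ordgeM; [apply: ordgeM|]; apply: HX.
Qed.

Lemma tr_supp N (g : R) : supp N (tr N g). Proof. exact: supp_tr. Qed.

Lemma tr_ordge' N (g : R) s : ordge g s -> ordge (tr N g) s.
Proof. by move=> H i j k Hi; rewrite /tr H //; case: ifP. Qed.

Lemma tr_mono N a b c : (a + b + c <= N)%N -> tr N (mono a b c) = mono a b c.
Proof.
move=> H; apply: ps3_ext => x y z; rewrite /tr /mono /dmono.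
case E: [&& x == a, y == b & z == c]; last by rewrite /= mulr0n mulr0; case: ifP.
by move/and3P: E => [/eqP -> /eqP -> /eqP ->]; rewrite H.
Qed.

Lemma tr_mono0 N a b c : (N < a + b + c)%N -> tr N (mono a b c) = 0.
Proof.
move=> H; apply: ps3_ext => x y z; rewrite /tr /mono /dmono zeroE.
case E: [&& x == a, y == b & z == c]; last by rewrite mulr0; case: ifP.
move/and3P: E => [/eqP -> /eqP -> /eqP ->]; case: ifP => // H'; exfalso; lia.
Qed.

Variables p1 p2 p3 : R.
Hypotheses (H1 : ordge p1 1) (H2 : ordge p2 1) (H3 : ordge p3 1).

Local Notation E := (E p1 p2 p3).
Local Notation sig := (subst3 p1 p2 p3).

Lemma sig_coef N g i j k : (i + j + k <= N)%N -> sig g i j k = E N (tr N g) i j k.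
Proof.
move=> HN; rewrite /subst3; set n := (i + j + k)%N.
rewrite -(E_trunc p1 p2 p3 (tr_supp (N := n) g) HN).
apply/eqP; rewrite -subr_eq0 -subE -E_sub; apply/eqP.
apply: (@E_ordge _ _ _ _ _ n.+1) => //.
have -> : tr n g - tr N g = (g - tr N g) - (g - tr n g) by ring.
apply: ordgeB; last exact: tr_ordge.
by apply: (ordgeW _ (tr_ordge (N := N) g)).
Qed.

Lemma sig_approx N g : ordge (sig g - E N (tr N g)) N.+1.
Proof. by move=> i j k H; rewrite subE (sig_coef (N := N) g) ?subrr // -ltnS. Qed.

Lemma tr_add N (f g : R) : tr N (f + g) = tr N f + tr N g.
Proof. by apply: ps3_ext => i j k; rewrite addE /tr; case: ifP; rewrite ?addr0. Qed.

Lemma tr_C N u (g : R) : tr N (C u * g) = C u * tr N g.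
Proof. by apply: ps3_ext => i j k; rewrite CE /tr CE; case: ifP; rewrite ?mulr0. Qed.

Lemma sig_add (f g : R) : sig (f + g) = sig f + sig g.
Proof. by apply: ps3_ext => i j k; rewrite addE /subst3 tr_add E_add addE. Qed.

Lemma sig_C u (g : R) : sig (C u * g) = C u * sig g.
Proof. by apply: ps3_ext => i j k; rewrite CE /subst3 tr_C E_C CE. Qed.

Lemma sig_ordge (g : R) s : ordge g s -> ordge (sig g) s.
Proof.
move=> Hg i j k Hi; rewrite /subst3; apply: (@E_ordge _ _ _ _ _ s) => //; exact: tr_ordge'.
Qed.

Lemma sig_mul (f g : R) : sig (f * g) = sig f * sig g.
Proof.
apply: ps3_ext => i j k; set n := (i + j + k)%N.
rewrite /subst3 -/n.
rewrite -(E_trunc p1 p2 p3 (tr_supp (N := n) (f * g)) (leq_addr n n)).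
have D1 : ordge (E (n + n)%N (tr n (f * g)) - E (n + n)%N (tr n f * tr n g)) n.+1.
  rewrite -E_sub; apply: E_ordge => //.
  have -> : tr n (f * g) - tr n f * tr n g =
     (f - tr n f) * g + tr n f * (g - tr n g) - (f * g - tr n (f * g)) by ring.
  apply: ordgeB; last exact: tr_ordge.
  by apply: ordgeD; [apply: ordgeMr|apply: ordgeMl]; apply: tr_ordge.
have := D1 i j k (ltnSn n); rewrite subE => /eqP; rewrite subr_eq0 => /eqP ->.
rewrite E_mul; last (by apply: supp_tr); last by apply: supp_tr.
have A1 := sig_approx (N := n) f; have A2 := sig_approx (N := n) g.
have D2 : ordge (E n (tr n f) * E n (tr n g) - sig f * sig g) n.+1.
  have -> : E n (tr n f) * E n (tr n g) - sig f * sig g =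
     - ((sig f - E n (tr n f)) * sig g + E n (tr n f) * (sig g - E n (tr n g))) by ring.
  apply: ordgeN; apply: ordgeD; [apply: ordgeMr|apply: ordgeMl] => //.
have := D2 i j k (ltnSn n); rewrite subE => /eqP; rewrite subr_eq0 => /eqP ->.
by rewrite /subst3.
Qed.

Lemma sig_one : sig 1 = 1.
Proof.
apply: ps3_ext => i j k; rewrite /subst3 -mono000 tr_mono // E_mono //.
by rewrite /Mn !expr0 !mulr1 mono000.
Qed.

Lemma sig_mono_gen a b c (p : R) : (a + b + c = 1)%N -> ordge p 1 ->
  Mn p1 p2 p3 a b c = p -> sig (mono a b c) = p.
Proof.
move=> Habc Hp Hm; apply: ps3_ext => i j k; rewrite /subst3.
case: (posnP (i + j + k)%N) => Hn.
  by rewrite tr_mono0 ?Habc ?Hn // E_zero zeroE Hp // Hn.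
rewrite tr_mono ?Habc // E_mono ?Hm //; lia.
Qed.

Lemma sig_X : sig (X K) = p1.
Proof. by apply: sig_mono_gen => //; rewrite /Mn !expr0 !mulr1 expr1. Qed.
Lemma sig_Y : sig (Y K) = p2.
Proof. by apply: sig_mono_gen => //; rewrite /Mn !expr0 mul1r mulr1 expr1. Qed.
Lemma sig_Z : sig (Z K) = p3.
Proof. by apply: sig_mono_gen => //; rewrite /Mn !expr0 !mul1r expr1. Qed.

End Sigma.

Section Cont.
Variable K : fieldType.
Local Notation R := (R3 K).
Local Notation C := (@C K).
Local Notation mono := (@mono K).

Lemma close_mul k (u u' v v' : R) s1 s2 :
  ordge (u - u') (k + s1) -> ordge u' s1 ->
  ordge (v - v') (k + s2) -> ordge v s2 ->
  ordge (u * v - u' * v') (k + (s1 + s2)).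
Proof.
move=> Hu Hu' Hv Hv'.
have -> : u * v - u' * v' = (u - u') * v + u' * (v - v') by ring.
apply: ordgeD.
  by apply: (ordgeW _ (ordgeM Hu Hv')); rewrite addnA.
by apply: (ordgeW _ (ordgeM Hu' Hv)); lia.
Qed.

Lemma ordge_pow (u : R) e : ordge u 1 -> ordge (u ^+ e) e.
Proof. by move=> H; have := ordgeX (e := e) H; rewrite mul1n. Qed.

Lemma close_pow k (u u' : R) e :
  ordge (u - u') (k + 1) -> ordge u 1 -> ordge u' 1 ->
  ordge (u ^+ e - u' ^+ e) (k + e).
Proof.
move=> Hd Hu Hu'; elim: e => [|e IH].
  by rewrite !expr0 subrr; apply: ordge_zero.
rewrite !exprS; have -> : (k + e.+1 = k + (1 + e))%N by lia.
apply: close_mul => //; exact: ordge_pow.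
Qed.

Lemma Mn_ordge (p1 p2 p3 : R) a b c : ordge p1 1 -> ordge p2 1 -> ordge p3 1 ->
  ordge (Mn p1 p2 p3 a b c) (a + b + c).
Proof. by move=> *; rewrite /Mn; apply: ordgeM; [apply: ordgeM|]; apply: ordge_pow. Qed.

Lemma Mn_close k (p1 p2 p3 q1 q2 q3 : R) a b c :
  ordge p1 1 -> ordge p2 1 -> ordge p3 1 ->
  ordge q1 1 -> ordge q2 1 -> ordge q3 1 ->
  ordge (p1 - q1) (k + 1) -> ordge (p2 - q2) (k + 1) -> ordge (p3 - q3) (k + 1) ->
  ordge (Mn p1 p2 p3 a b c - Mn q1 q2 q3 a b c) (k + (a + b + c)).
Proof.
move=> P1 P2 P3 Q1 Q2 Q3 D1 D2 D3; rewrite /Mn.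
apply: close_mul; last exact: ordge_pow.
- apply: close_mul; try apply: close_pow => //; exact: ordge_pow.
- by apply: ordgeM; apply: ordge_pow.
- exact: close_pow.
Qed.

Lemma sig_cont k s (p1 p2 p3 q1 q2 q3 g : R) :
  ordge p1 1 -> ordge p2 1 -> ordge p3 1 ->
  ordge q1 1 -> ordge q2 1 -> ordge q3 1 ->
  ordge (p1 - q1) (k + 1) -> ordge (p2 - q2) (k + 1) -> ordge (p3 - q3) (k + 1) ->
  ordge g s ->
  ordge (subst3 p1 p2 p3 g - subst3 q1 q2 q3 g) (k + s).
Proof.
move=> P1 P2 P3 Q1 Q2 Q3 D1 D2 D3 Hg i j k0 Hn; rewrite subE /subst3.
set n := (i + j + k0)%N; rewrite -subE.
have -> : E p1 p2 p3 n (tr n g) - E q1 q2 q3 n (tr n g) =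
  \sum_(m : box n) C (tr n g m.1.1 m.1.2 m.2) *
     (Mn p1 p2 p3 m.1.1 m.1.2 m.2 - Mn q1 q2 q3 m.1.1 m.1.2 m.2).
  by rewrite /E -sumrB; apply: eq_bigr => m _; rewrite mulrBr.
suff HS : ordge (\sum_(m : box n) C (tr n g m.1.1 m.1.2 m.2) *
     (Mn p1 p2 p3 m.1.1 m.1.2 m.2 - Mn q1 q2 q3 m.1.1 m.1.2 m.2)) (k + s) by apply: HS.
apply: ordge_sum => [[[a b] c]] _ /=.
case: (ltnP (a + b + c) s) => Hs.
  by rewrite (tr_ordge' _ Hg) // C0 mul0r; apply: ordge_zero.
apply: ordgeMl; apply: (ordgeW _ (Mn_close (a := a) (b := b) (c := c) P1 P2 P3 Q1 Q2 Q3 D1 D2 D3)).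
by rewrite leq_add2l.
Qed.

Lemma E_XYZ N g : supp N g -> E (X K) (Y K) (Z K) N g = g.
Proof.
move=> Hg; rewrite [RHS](expand Hg) /E; apply: eq_bigr => m _.
by rewrite /Mn monoE.
Qed.

Lemma sig_id g : subst3 (X K) (Y K) (Z K) g = g.
Proof.
apply: ps3_ext => i j k; rewrite /subst3 E_XYZ; last exact: supp_tr.
by rewrite /tr leqnn.
Qed.

Definition limseq (u : nat -> R) : R := fun i j k => u (i + j + k).+1 i j k.

Lemma lim_ordge (u : nat -> R) c :
  (forall n, ordge (u n.+1 - u n) (n + c)) ->
  forall n, ordge (limseq u - u n) (n + c).
Proof.
move=> Hu.
have T : forall n m, (n <= m)%N -> ordge (u m - u n) (n + c).
  move=> n m; elim: m => [|m IH].
    by rewrite leqn0 => /eqP ->; rewrite subrr; apply: ordge_zero.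
  rewrite leq_eqVlt => /orP [/eqP <-|]; first by rewrite subrr; apply: ordge_zero.
  rewrite ltnS => Hnm.
  have -> : u m.+1 - u n = (u m.+1 - u m) + (u m - u n) by ring.
  apply: ordgeD; last exact: IH.
  by apply: (ordgeW _ (Hu m)); rewrite leq_add2r.
move=> n i j k Hi; rewrite subE /limseq.
case: (leqP n (i + j + k).+1) => H.
  by have := T _ _ H i j k Hi; rewrite subE.
have E0 : u n i j k - u (i + j + k).+1 i j k = 0.
  by rewrite -subE; apply: (T _ _ (ltnW H)); lia.
by apply/eqP; rewrite subr_eq0 eq_sym -subr_eq0 E0.
Qed.

End Cont.

Section Bij.
Variable K : fieldType.
Local Notation R := (R3 K).
Local Notation C := (@C K).

Variables p1 p2 p3 : R.
Hypotheses (D1 : ordge (p1 - X K) 2) (D2 : ordge (p2 - Y K) 2) (D3 : ordge (p3 - Z K) 2).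

Let HXYZ := ordgeXYZ K.

Lemma near1 : [/\ ordge p1 1, ordge p2 1 & ordge p3 1].
Proof.
case: HXYZ => HX HY HZ.
split.
- by rewrite -(subrK (X K) p1); apply: ordgeD => //; apply: ordgeW D1.
- by rewrite -(subrK (Y K) p2); apply: ordgeD => //; apply: ordgeW D2.
- by rewrite -(subrK (Z K) p3); apply: ordgeD => //; apply: ordgeW D3.
Qed.

Local Notation sig := (subst3 p1 p2 p3).

Lemma sig_near g s : ordge g s -> ordge (sig g - g) s.+1.
Proof.
move=> Hg; case: near1 => P1 P2 P3; case: HXYZ => HX HY HZ.
have := @sig_cont K 1 s p1 p2 p3 (X K) (Y K) (Z K) g P1 P2 P3 HX HY HZ D1 D2 D3 Hg.
by rewrite sig_id.
Qed.

Lemma sig_sub f g : sig (f - g) = sig f - sig g.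
Proof.
case: near1 => P1 P2 P3.
have -> : - g = C (-1) * g by rewrite CN C1 mulN1r.
by rewrite sig_add // sig_C // CN C1 mulN1r.
Qed.

Lemma sig_inj : injective sig.
Proof.
move=> f g Hfg; apply/eqP; rewrite -subr_eq0; apply/eqP; apply: ordge_eq0.
have H0 : sig (f - g) = 0 by rewrite sig_sub Hfg subrr.
elim=> [|n IH]; first exact: ordge0.
have := sig_near IH; rewrite H0 sub0r => H.
by rewrite -(opprK (f - g)); apply: ordgeN.
Qed.

Lemma sig_surj t : exists g, sig g = t.
Proof.
case: near1 => P1 P2 P3.
pose fix v n : R := if n is n'.+1 then v n' + homd n' (t - sig (v n')) else 0.
have Inv : forall n, ordge (t - sig (v n)) n.
  elim=> [|n IH]; first exact: ordge0.
  rewrite /= sig_add //.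
  set e := t - sig (v n).
  have -> : t - (sig (v n) + sig (homd n e)) = (e - homd n e) - (sig (homd n e) - homd n e).
    by rewrite /e; ring.
  apply: ordgeB; first exact: homd_ordge.
  exact: sig_near (homd_ordge' (N := n) e).
have Hv : forall n, ordge (v n.+1 - v n) (n + 0).
  by move=> n; rewrite addn0 /= addrC addKr; apply: homd_ordge'.
exists (limseq v); apply/eqP; rewrite eq_sym -subr_eq0; apply/eqP; apply: ordge_eq0 => n.
have -> : t - sig (limseq v) = (t - sig (v n)) - sig (limseq v - v n).
  by rewrite sig_sub; ring.
apply: ordgeB => //; apply: sig_ordge => //.
by have := lim_ordge Hv (n := n); rewrite addn0.
Qed.

Lemma sig_bij : bijective sig.
Proof.
pose inv t := proj1_sig (cid (sig_surj t)).
have Hinv : forall t, sig (inv t) = t by move=> t; rewrite /inv; case: cid.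
exists inv; first by move=> g; apply: sig_inj; rewrite Hinv.
exact: Hinv.
Qed.

End Bij.

Section Jac.
Variable K : fieldType.
Local Notation R := (R3 K).
Local Notation C := (@C K).
Local Notation X := (X K).
Local Notation Y := (Y K).
Local Notation Z := (Z K).
Variable a : K.
Hypothesis h3 : (3%:R : K) != 0.
Hypothesis ha : a ^+ 3 + 27%:R != 0.

Definition Dx : R := 3%:R * X ^+ 2 + C a * (Y * Z).
Definition Dy : R := 3%:R * Y ^+ 2 + C a * (X * Z).
Definition Dz : R := 3%:R * Z ^+ 2 + C a * (X * Y).

Definition InJ k (M : R) := exists q1 q2 q3 : R,
  [/\ ordge q1 k, ordge q2 k, ordge q3 k & M = Dx * q1 + Dy * q2 + Dz * q3].

Lemma InJ0 k : InJ k 0.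
Proof. by exists 0, 0, 0; split; try apply: ordge_zero; rewrite !mulr0 !addr0. Qed.

Lemma InJD k M M' : InJ k M -> InJ k M' -> InJ k (M + M').
Proof.
move=> [q1 [q2 [q3 [H1 H2 H3 ->]]]] [r1 [r2 [r3 [G1 G2 G3 ->]]]].
exists (q1 + r1), (q2 + r2), (q3 + r3); split; try by apply: ordgeD.
ring.
Qed.

Lemma InJM k j P M : ordge P j -> InJ k M -> InJ (j + k) (P * M).
Proof.
move=> HP [q1 [q2 [q3 [H1 H2 H3 ->]]]].
exists (P * q1), (P * q2), (P * q3); split; try by apply: ordgeM.
ring.
Qed.

Lemma InJC k u M : InJ k M -> InJ k (C u * M).
Proof. by move=> H; rewrite -(add0n k); apply: InJM => //; apply: ordge0. Qed.

Lemma InJ_sum k (I : Type) (r : seq I) (P : pred I) (F : I -> R) :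
  (forall x, P x -> InJ k (F x)) -> InJ k (\sum_(x <- r | P x) F x).
Proof.
move=> H; apply: (big_ind (InJ k)) => //; [exact: InJ0|exact: InJD].
Qed.

Definition w := C (- a / 3%:R).

Lemma C3 : C (3%:R)^-1 * 3%:R = 1.
Proof. by rewrite -Cn -CM mulVf // C1. Qed.

Lemma RX m k : ordge m k -> InJ k (X ^+ 2 * m - w * (Y * Z * m)).
Proof.
move=> Hm; exists (C (3%:R)^-1 * m), 0, 0; split; try apply: ordge_zero.
  by apply: ordgeMl.
rewrite !mulr0 !addr0 /Dx /w.
have E1 : C (- a / 3%:R) = - (C a * C (3%:R)^-1) by rewrite -CM -CN mulNr.
rewrite E1; have := C3; move: (C (3%:R)^-1) => t Ht.
transitivity ((t * 3%:R) * (X ^+ 2 * m) + t * C a * (Y * Z * m)); last by ring.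
by rewrite Ht mul1r; ring.
Qed.

Lemma RY m k : ordge m k -> InJ k (Y ^+ 2 * m - w * (X * Z * m)).
Proof.
move=> Hm; exists 0, (C (3%:R)^-1 * m), 0; split; try apply: ordge_zero.
  by apply: ordgeMl.
rewrite !mulr0 add0r addr0 /Dy /w.
have E1 : C (- a / 3%:R) = - (C a * C (3%:R)^-1) by rewrite -CM -CN mulNr.
rewrite E1; have := C3; move: (C (3%:R)^-1) => t Ht.
transitivity ((t * 3%:R) * (Y ^+ 2 * m) + t * C a * (X * Z * m)); last by ring.
by rewrite Ht mul1r; ring.
Qed.

Lemma RZ m k : ordge m k -> InJ k (Z ^+ 2 * m - w * (X * Y * m)).
Proof.
move=> Hm; exists 0, 0, (C (3%:R)^-1 * m); split; try apply: ordge_zero.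
  by apply: ordgeMl.
rewrite !mulr0 !add0r /Dz /w.
have E1 : C (- a / 3%:R) = - (C a * C (3%:R)^-1) by rewrite -CM -CN mulNr.
rewrite E1; have := C3; move: (C (3%:R)^-1) => t Ht.
transitivity ((t * 3%:R) * (Z ^+ 2 * m) + t * C a * (X * Y * m)); last by ring.
by rewrite Ht mul1r; ring.
Qed.

Lemma w3 : exists t, t * (1 - w ^+ 3) = 1.
Proof.
have Hc : 1 - (- a / 3%:R) ^+ 3 != 0.
  have -> : 1 - (- a / 3%:R) ^+ 3 = (a ^+ 3 + 27%:R) / (3%:R ^+ 3).
    have h27 : (27%:R : K) != 0 by rewrite (_ : 27 = 3 ^ 3)%N // natrX expf_neq0.
    by field; rewrite h27 h3.
  by rewrite mulf_neq0 // invr_neq0 // expf_neq0.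
exists (C (1 - (- a / 3%:R) ^+ 3)^-1).
have -> : 1 - w ^+ 3 = C (1 - (- a / 3%:R) ^+ 3).
  by rewrite CD C1 CN /w !exprS !expr0 !CM C1.
by rewrite -CM mulVf // C1.
Qed.

Lemma rJ k U1 U2 U3 m : InJ k (U1 ^+ 2 * m - w * (U2 * U3 * m)) ->
  InJ k (U2 * U3 * m) -> InJ k (U1 ^+ 2 * m).
Proof.
move=> H1 H2; have -> : U1 ^+ 2 * m = (U1 ^+ 2 * m - w * (U2 * U3 * m)) + w * (U2 * U3 * m) by ring.
by apply: InJD => //; apply: InJC.
Qed.

Lemma oX : ordge X 1. Proof. by case: (ordgeXYZ K). Qed.
Lemma oY : ordge Y 1. Proof. by case: (ordgeXYZ K). Qed.
Lemma oZ : ordge Z 1. Proof. by case: (ordgeXYZ K). Qed.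

Lemma o2 (U V : R) : ordge U 1 -> ordge V 1 -> ordge (U * V) 2.
Proof. by move=> HU HV; apply: (ordgeM HU HV). Qed.

Lemma cubic_gen (U1 U2 U3 : R) : ordge U1 1 -> ordge U2 1 -> ordge U3 1 ->
  (forall m k, ordge m k -> InJ k (U1 ^+ 2 * m - w * (U2 * U3 * m))) ->
  (forall m k, ordge m k -> InJ k (U2 ^+ 2 * m - w * (U1 * U3 * m))) ->
  (forall m k, ordge m k -> InJ k (U3 ^+ 2 * m - w * (U1 * U2 * m))) ->
  InJ 2 (U1 ^+ 2 * U2 * U3).
Proof.
move=> O1 O2 O3 H1 H2 H3; have [t Ht] := w3.
have A := H1 (U2 * U3) 2 (o2 O2 O3).
have B := H2 (U3 ^+ 2) 2 (o2 O3 O3).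
have G := H3 (U1 * U3) 2 (o2 O1 O3).
have S := InJD (InJD A (InJC (- a / 3%:R) B)) (InJC ((- a / 3%:R) ^+ 2) G).
have -> : U1 ^+ 2 * U2 * U3 = t * ((1 - w ^+ 3) * (U1 ^+ 2 * U2 * U3)) by rewrite mulrA Ht mul1r.
have -> : (1 - w ^+ 3) * (U1 ^+ 2 * U2 * U3) =
   (U1 ^+ 2 * (U2 * U3) - w * (U2 * U3 * (U2 * U3))) +
   C (- a / 3%:R) * (U2 ^+ 2 * U3 ^+ 2 - w * (U1 * U3 * U3 ^+ 2)) +
   C ((- a / 3%:R) ^+ 2) * (U3 ^+ 2 * (U1 * U3) - w * (U1 * U2 * (U1 * U3))).
  rewrite /w !exprS !expr0 !mulr1 !CM; ring.
move: Ht S; move: t => t _ S.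
have [q1 [q2 [q3 [Q1 Q2 Q3 ->]]]] := S.
exists (t * q1), (t * q2), (t * q3); split; try by apply: ordgeMl.
ring.
Qed.

Lemma InJ_eq k (M M' : R) : M' = M -> InJ k M -> InJ k M'.
Proof. by move=> ->. Qed.

Lemma quartic i j k : (i + j + k = 4)%N -> InJ 2 (mono K i j k).
Proof.
have Ju : InJ 2 (X ^+ 2 * Y * Z) by apply: cubic_gen oX oY oZ RX RY RZ.
have Jv : InJ 2 (Y ^+ 2 * X * Z).
  apply: cubic_gen oY oX oZ RY RX _.
  by move=> m k0 Hm; rewrite (mulrC Y X); apply: RZ.
have Jw : InJ 2 (Z ^+ 2 * X * Y).
  apply: cubic_gen oZ oX oY RZ _ _.
    by move=> m k0 Hm; rewrite (mulrC Z Y); apply: RX.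
  by move=> m k0 Hm; rewrite (mulrC Z X); apply: RY.
have J310 : InJ 2 (X ^+ 2 * (X * Y)).
  by apply: (rJ (RX (o2 oX oY))); apply: (InJ_eq _ Jv); ring.
have J301 : InJ 2 (X ^+ 2 * (X * Z)).
  by apply: (rJ (RX (o2 oX oZ))); apply: (InJ_eq _ Jw); ring.
have J130 : InJ 2 (Y ^+ 2 * (X * Y)).
  by apply: (rJ (RY (o2 oX oY))); apply: (InJ_eq _ Ju); ring.
have J031 : InJ 2 (Y ^+ 2 * (Y * Z)).
  by apply: (rJ (RY (o2 oY oZ))); apply: (InJ_eq _ Jw); ring.
have J103 : InJ 2 (Z ^+ 2 * (X * Z)).
  by apply: (rJ (RZ (o2 oX oZ))); apply: (InJ_eq _ Ju); ring.
have J013 : InJ 2 (Z ^+ 2 * (Y * Z)).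
  by apply: (rJ (RZ (o2 oY oZ))); apply: (InJ_eq _ Jv); ring.
have J400 : InJ 2 (X ^+ 2 * (X * X)).
  by apply: (rJ (RX (o2 oX oX))); apply: (InJ_eq _ Ju); ring.
have J040 : InJ 2 (Y ^+ 2 * (Y * Y)).
  by apply: (rJ (RY (o2 oY oY))); apply: (InJ_eq _ Jv); ring.
have J004 : InJ 2 (Z ^+ 2 * (Z * Z)).
  by apply: (rJ (RZ (o2 oZ oZ))); apply: (InJ_eq _ Jw); ring.
have J220 : InJ 2 (X ^+ 2 * (Y * Y)).
  by apply: (rJ (RX (o2 oY oY))); apply: (InJ_eq _ J031); ring.
have J202 : InJ 2 (X ^+ 2 * (Z * Z)).
  by apply: (rJ (RX (o2 oZ oZ))); apply: (InJ_eq _ J013); ring.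
have J022 : InJ 2 (Y ^+ 2 * (Z * Z)).
  by apply: (rJ (RY (o2 oZ oZ))); apply: (InJ_eq _ J103); ring.
move=> H; rewrite -monoE.
have Hi : (i <= 4)%N by lia.
have Hj : (j <= 4)%N by lia.
have Hk : k = (4 - i - j)%N by lia.
have Hij : (i + j <= 4)%N by lia.
rewrite Hk; clear Hk H.
case: i Hi Hij => [|[|[|[|[|i]]]]] Hi Hij //; case: j Hj Hij => [|[|[|[|[|j]]]]] Hj Hij //=;
 first [ by apply: (InJ_eq _ Ju); ring | by apply: (InJ_eq _ Jv); ring
       | by apply: (InJ_eq _ Jw); ring | by apply: (InJ_eq _ J310); ring
       | by apply: (InJ_eq _ J301); ring | by apply: (InJ_eq _ J130); ring
       | by apply: (InJ_eq _ J031); ring | by apply: (InJ_eq _ J103); ring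
       | by apply: (InJ_eq _ J013); ring | by apply: (InJ_eq _ J400); ring
       | by apply: (InJ_eq _ J040); ring | by apply: (InJ_eq _ J004); ring
       | by apply: (InJ_eq _ J220); ring | by apply: (InJ_eq _ J202); ring
       | by apply: (InJ_eq _ J022); ring | exfalso; lia ].
Qed.

End Jac.

Section Jac2.
Variable K : fieldType.
Local Notation R := (R3 K).
Local Notation C := (@C K).
Local Notation X := (X K).
Local Notation Y := (Y K).
Local Notation Z := (Z K).
Variable a : K.
Hypothesis h3 : (3%:R : K) != 0.
Hypothesis ha : a ^+ 3 + 27%:R != 0.
Local Notation InJ := (InJ a).
Local Notation Dx := (Dx a).
Local Notation Dy := (Dy a).
Local Notation Dz := (Dz a).

Lemma InJW k k' M : (k' <= k)%N -> InJ k M -> InJ k' M.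
Proof.
move=> H [q1 [q2 [q3 [H1 H2 H3 ->]]]]; exists q1, q2, q3.
by split => //; apply: ordgeW H _.
Qed.

Lemma homd_InJ d e : (4 <= d)%N -> InJ (d - 2) (homd d e).
Proof.
move=> Hd; rewrite (expand (supp_hom (N := d) e)); apply: InJ_sum => [[[x y] z]] _ /=.
rewrite /homd; case: eqP => Hxyz; last first.
  by rewrite C0 mul0r; apply: InJ0.
apply: InJC.
set x4 := minn x 4; set y4 := minn y (4 - x4)%N; set z4 := (4 - x4 - y4)%N.
have -> : mono K x y z = mono K (x - x4)%N (y - y4)%N (z - z4)%N * mono K x4 y4 z4.
  rewrite mono_mul; congr mono; rewrite /z4 /y4 /x4; lia.
apply: (InJW (k := ((x - x4) + (y - y4) + (z - z4)) + 2)%N).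
  rewrite /z4 /y4 /x4; lia.
apply: InJM; first exact: ordge_mono.
apply: quartic => //; rewrite /z4 /y4 /x4; lia.
Qed.

Lemma jac d e : (4 <= d)%N -> ordge e d -> exists q1 q2 q3 : R,
  [/\ ordge q1 (d - 2), ordge q2 (d - 2), ordge q3 (d - 2)
    & ordge (e - (Dx * q1 + Dy * q2 + Dz * q3)) d.+1].
Proof.
move=> Hd He; have [q1 [q2 [q3 [H1 H2 H3 E]]]] := homd_InJ e Hd.
exists q1, q2, q3; split => //; rewrite -E; exact: homd_ordge.
Qed.

End Jac2.

Section Main.
Variable K : fieldType.
Local Notation R := (R3 K).
Local Notation C := (@C K).
Local Notation X := (X K).
Local Notation Y := (Y K).
Local Notation Z := (Z K).
Variable a : K.

Definition F0 (u1 u2 u3 : R) := u1 ^+ 3 + u2 ^+ 3 + u3 ^+ 3 + C a * (u1 * u2 * u3).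

Lemma hesseE : (hesse_cubic a : R) = F0 X Y Z.
Proof.
have -> : F0 X Y Z = mono K 3 0 0 + mono K 0 3 0 + mono K 0 0 3 + C a * mono K 1 1 1.
  by rewrite -!monoE /F0 !expr0 !expr1 !mulr1 !mul1r.
apply: ps3_ext => i j k; rewrite !addE CE /mono /dmono /hesse_cubic.
case: i => [|[|[|[|i]]]]; case: j => [|[|[|[|j]]]]; case: k => [|[|[|[|k]]]];
  by rewrite /= ?mulr0n ?mulr1n ?mulr1 ?mulr0 ?addr0 ?add0r.
Qed.

Lemma sig_exp (p1 p2 p3 g : R) n : ordge p1 1 -> ordge p2 1 -> ordge p3 1 ->
  subst3 p1 p2 p3 (g ^+ n) = subst3 p1 p2 p3 g ^+ n.
Proof.
move=> P1 P2 P3; elim: n => [|n IH]; first by rewrite !expr0 sig_one.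
by rewrite !exprS sig_mul // IH.
Qed.

Lemma sig_F0 (p1 p2 p3 : R) : ordge p1 1 -> ordge p2 1 -> ordge p3 1 ->
  subst3 p1 p2 p3 (F0 X Y Z) = F0 p1 p2 p3.
Proof.
move=> P1 P2 P3; rewrite /F0 !sig_add // sig_C // !sig_mul //.
by rewrite sig_X // sig_Y // sig_Z // !exprS expr0 !mulr1.
Qed.

Hypothesis h3 : (3%:R : K) != 0.
Hypothesis ha : a ^+ 3 + 27%:R != 0.
Variable f : R.
Hypothesis hr : ordge (f - F0 X Y Z) 4.

Definition Inv d (p1 p2 p3 : R) :=
  [/\ ordge (p1 - X) 2, ordge (p2 - Y) 2, ordge (p3 - Z) 2
    & ordge (subst3 p1 p2 p3 f - F0 X Y Z) d].

Lemma oX' : ordge X 1. Proof. by case: (ordgeXYZ K). Qed.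
Lemma oY' : ordge Y 1. Proof. by case: (ordgeXYZ K). Qed.
Lemma oZ' : ordge Z 1. Proof. by case: (ordgeXYZ K). Qed.

Lemma near_sq (p u : R) q : ordge (p - u) 2 -> ordge p 1 -> ordge u 1 -> ordge q 1 ->
  ordge (u * q) 1.
Proof. by move=> *; apply: ordgeMl. Qed.

Lemma step d p1 p2 p3 : (4 <= d)%N -> Inv d p1 p2 p3 ->
  exists q1 q2 q3 : R, [/\ ordge q1 (d - 2), ordge q2 (d - 2), ordge q3 (d - 2)
     & Inv d.+1 (p1 - q1) (p2 - q2) (p3 - q3)].
Proof.
move=> Hd [D1 D2 D3 He].
have [P1 P2 P3] := near1 D1 D2 D3.
have [q1 [q2 [q3 [Q1 Q2 Q3 Hq]]]] := jac h3 ha Hd He.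
exists q1, q2, q3.
have Q1' : ordge q1 2 by apply: ordgeW Q1; lia.
have Q2' : ordge q2 2 by apply: ordgeW Q2; lia.
have Q3' : ordge q3 2 by apply: ordgeW Q3; lia.
have E1 : ordge (p1 - q1 - X) 2.
  by rewrite (_ : p1 - q1 - X = (p1 - X) - q1); [apply: ordgeB|ring].
have E2 : ordge (p2 - q2 - Y) 2.
  by rewrite (_ : p2 - q2 - Y = (p2 - Y) - q2); [apply: ordgeB|ring].
have E3 : ordge (p3 - q3 - Z) 2.
  by rewrite (_ : p3 - q3 - Z = (p3 - Z) - q3); [apply: ordgeB|ring].
split => //; split => //.
have [P1' P2' P3'] := near1 E1 E2 E3.
set r := f - F0 X Y Z.
have Hf : f = r + F0 X Y Z by rewrite /r subrK.
have T1 : ordge (subst3 (p1 - q1) (p2 - q2) (p3 - q3) r - subst3 p1 p2 p3 r) d.+1.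
  have Hk : (d.+1 <= (d - 3) + 4)%N by lia.
  apply: (ordgeW Hk); apply: sig_cont => //.
  - by rewrite (_ : p1 - q1 - p1 = - q1); [apply: ordgeN; apply: ordgeW Q1; lia|ring].
  - by rewrite (_ : p2 - q2 - p2 = - q2); [apply: ordgeN; apply: ordgeW Q2; lia|ring].
  - by rewrite (_ : p3 - q3 - p3 = - q3); [apply: ordgeN; apply: ordgeW Q3; lia|ring].
set e := subst3 p1 p2 p3 f - F0 X Y Z in He Hq.
have Ee : e = subst3 p1 p2 p3 r + F0 p1 p2 p3 - F0 X Y Z.
  by rewrite /e {1}Hf sig_add // sig_F0.
have -> : subst3 (p1 - q1) (p2 - q2) (p3 - q3) f - F0 X Y Z =
   (subst3 (p1 - q1) (p2 - q2) (p3 - q3) r - subst3 p1 p2 p3 r)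
   + (F0 (p1 - q1) (p2 - q2) (p3 - q3) - F0 p1 p2 p3 + e).
  by rewrite {1}Hf sig_add // sig_F0 // Ee; ring.
apply: ordgeD => //.
pose Dp1 := 3%:R * p1 ^+ 2 + C a * (p2 * p3).
pose Dp2 := 3%:R * p2 ^+ 2 + C a * (p1 * p3).
pose Dp3 := 3%:R * p3 ^+ 2 + C a * (p1 * p2).
have -> : F0 (p1 - q1) (p2 - q2) (p3 - q3) - F0 p1 p2 p3 + e =
   ((3%:R * p1 * q1 * q1 - q1 * q1 * q1) + (3%:R * p2 * q2 * q2 - q2 * q2 * q2)
     + (3%:R * p3 * q3 * q3 - q3 * q3 * q3)
     + C a * (p1 * q2 * q3 + p2 * q1 * q3 + p3 * q1 * q2 - q1 * q2 * q3))
   + ((3%:R * (X * X - p1 * p1) + C a * (Y * Z - p2 * p3)) * q1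
     + (3%:R * (Y * Y - p2 * p2) + C a * (X * Z - p1 * p3)) * q2
     + (3%:R * (Z * Z - p3 * p3) + C a * (X * Y - p1 * p2)) * q3)
   + (e - (Dx a * q1 + Dy a * q2 + Dz a * q3)).
  by rewrite /F0 /Dx /Dy /Dz; ring.
have L1 : forall (u v w : R), ordge u 1 -> ordge v (d - 2) -> ordge w (d - 2) ->
    ordge (u * v * w) d.+1.
  by move=> u v w Hu Hv Hw; apply: (ordgeW _ (ordgeM (ordgeM Hu Hv) Hw)); lia.
have L3 : forall (u v w : R), ordge u (d - 2) -> ordge v (d - 2) -> ordge w (d - 2) ->
    ordge (u * v * w) d.+1.
  by move=> u v w Hu Hv Hw; apply: (ordgeW _ (ordgeM (ordgeM Hu Hv) Hw)); lia.
have N2 : forall (u u' v v' : R), ordge (u' - u) 2 -> ordge (v' - v) 2 ->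
    ordge u' 1 -> ordge v 1 -> ordge (u * v - u' * v') 3.
  move=> u u' v v' Hu Hv Hu' Hv'.
  apply: (close_mul (k := 1) (s1 := 1) (s2 := 1)) => //.
    by rewrite -opprB; apply: ordgeN.
  by rewrite -opprB; apply: ordgeN.
have L2 : forall (m q : R), ordge m 3 -> ordge q (d - 2) -> ordge (m * q) d.+1.
  by move=> m q Hm Hq0; apply: (ordgeW _ (ordgeM Hm Hq0)); lia.
have Hp : forall (p : R), ordge p 1 -> ordge (3%:R * p) 1 by move=> p Hp; apply: ordgeMl.
apply: ordgeD; last by [].
apply: ordgeD.
  apply: ordgeD; last first.
    apply: ordgeMl; apply: ordgeB; last exact: L3.
    by apply: ordgeD; [apply: ordgeD|]; apply: L1.
  by apply: ordgeD; [apply: ordgeD|]; apply: ordgeB; first [ by apply: L1; [apply: Hp| |] | by apply: L3 ].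
have M3 : forall (m1 m2 : R), ordge m1 3 -> ordge m2 3 -> ordge (3%:R * m1 + C a * m2) 3.
  by move=> m1 m2 H1 H2; apply: ordgeD; apply: ordgeMl.
apply: ordgeD; [apply: ordgeD|]; apply: L2 => //; apply: M3; apply: N2 => //;
  first [exact: oX' | exact: oY' | exact: oZ'].
Qed.

Lemma step_ex d (p : R * R * R) : exists q : R * R * R,
  (4 <= d)%N -> Inv d p.1.1 p.1.2 p.2 ->
  [/\ ordge q.1.1 (d - 2), ordge q.1.2 (d - 2), ordge q.2 (d - 2)
    & Inv d.+1 (p.1.1 - q.1.1) (p.1.2 - q.1.2) (p.2 - q.2)].
Proof.
case: (pselect ((4 <= d)%N /\ Inv d p.1.1 p.1.2 p.2)) => [[Hd HI]|HN].
  have [q1 [q2 [q3 H]]] := step Hd HI.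
  by exists (q1, q2, q3).
by exists (0, 0, 0) => Hd HI; exfalso; apply: HN.
Qed.

Definition pick d p := proj1_sig (cid (step_ex d p)).

Fixpoint Ph n : R * R * R :=
  if n is n'.+1 then
    let p := Ph n' in let q := pick (n' + 4) p in
    (p.1.1 - q.1.1, p.1.2 - q.1.2, p.2 - q.2)
  else (X, Y, Z).

Lemma Ph_inv n : Inv (n + 4) (Ph n).1.1 (Ph n).1.2 (Ph n).2 /\
  [/\ ordge ((Ph n.+1).1.1 - (Ph n).1.1) (n + 2)%N,
      ordge ((Ph n.+1).1.2 - (Ph n).1.2) (n + 2)
    & ordge ((Ph n.+1).2 - (Ph n).2) (n + 2)%N].
Proof.
have Hs : forall n, Inv (n + 4)%N (Ph n).1.1 (Ph n).1.2 (Ph n).2 ->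
   Inv (n.+1 + 4)%N (Ph n.+1).1.1 (Ph n.+1).1.2 (Ph n.+1).2 /\
  [/\ ordge ((Ph n.+1).1.1 - (Ph n).1.1) (n + 2)%N,
      ordge ((Ph n.+1).1.2 - (Ph n).1.2) (n + 2)
    & ordge ((Ph n.+1).2 - (Ph n).2) (n + 2)%N].
  move=> m HI; rewrite /= /pick; case: cid => q /= /(_ (leq_addl _ _) HI).
  move=> [Q1 Q2 Q3 HI']; split; first by rewrite addSn.
  have E : forall (u v : R), u - v - u = - v by move=> u v; ring.
  by rewrite !E; split; apply: ordgeN; rewrite (_ : (m + 2 = m + 4 - 2)%N) //; lia.
have H0 : Inv (0 + 4)%N (Ph 0).1.1 (Ph 0).1.2 (Ph 0).2.
  by rewrite /= /Inv !subrr sig_id; split => //; apply: ordge_zero.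
elim: n => [|n [IH _]]; first by split => //; case: (Hs 0%N H0).
have [IH' _] := Hs n IH.
by split => //; case: (Hs n.+1 IH').
Qed.

Definition l1 := limseq (fun n => (Ph n).1.1).
Definition l2 := limseq (fun n => (Ph n).1.2).
Definition l3 := limseq (fun n => (Ph n).2).

Lemma l_near n : [/\ ordge (l1 - (Ph n).1.1) (n + 2)%N, ordge (l2 - (Ph n).1.2) (n + 2)
  & ordge (l3 - (Ph n).2) (n + 2)%N].
Proof.
split; apply: lim_ordge => m; by case: (Ph_inv m) => _ [].
Qed.

Lemma l_X : [/\ ordge (l1 - X) 2, ordge (l2 - Y) 2 & ordge (l3 - Z) 2].
Proof. by case: (l_near 0). Qed.

Lemma F0_ordge : ordge (F0 X Y Z) 3.
Proof.
have [HX HY HZ] := ordgeXYZ K.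
rewrite /F0; apply: ordgeD; last by apply: ordgeMl; exact: (ordgeM (ordgeM HX HY) HZ).
by apply: ordgeD; [apply: ordgeD|]; apply: ordge_pow.
Qed.

Lemma l_sol : subst3 l1 l2 l3 f = F0 X Y Z.
Proof.
apply/eqP; rewrite -subr_eq0; apply/eqP; apply: ordge_eq0 => N.
have [[Dp1 Dp2 Dp3 HI] _] := Ph_inv N.
have [L1 L2 L3] := l_X.
have [N1 N2 N3] := l_near N.
have [P1 P2 P3] := near1 Dp1 Dp2 Dp3.
have [P1' P2' P3'] := near1 L1 L2 L3.
have Hf3 : ordge f 3.
  rewrite -(subrK (F0 X Y Z) f); apply: ordgeD; last exact: F0_ordge.
  by apply: ordgeW hr.
have -> : subst3 l1 l2 l3 f - F0 X Y Z =
   (subst3 l1 l2 l3 f - subst3 (Ph N).1.1 (Ph N).1.2 (Ph N).2 f)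
   + (subst3 (Ph N).1.1 (Ph N).1.2 (Ph N).2 f - F0 X Y Z) by ring.
apply: ordgeD; last by apply: ordgeW HI; lia.
have Hk : (N <= (N + 1) + 3)%N by lia.
apply: (ordgeW Hk); apply: sig_cont => //.
all: by rewrite (_ : (N + 1 + 1 = N + 2)%N) //; lia.
Qed.

End Main.
Unset Implicit Arguments. Set Strict Implicit.

Theorem mainTheorem12 (K : closedFieldType) (p : nat)
  (hp : p \in [pchar K]) (hp5 : (5 <= p)%N)
  (f : ps3 K) (a : K) (ha : a ^+ 3 + 27%:R != 0)
  (hj : jet3_eq f (hesse_cubic a)) :
  exists Phi : ps3 K -> ps3 K,
    is_alg_aut3 Phi /\ exists a' : K, Phi f = hesse_cubic a'.
Proof.
have h3 : (3%:R : K) != 0.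
  apply/negP => /eqP H3; have := dvdn_pcharf hp 3; rewrite H3 eqxx.
  by move=> /(dvdn_leq (isT : (0 < 3)%N)); lia.
have hr : ordge ((f : R3 K) - F0 a (X K) (Y K) (Z K)) 4.
  move=> i j k H; rewrite subE -hesseE hj ?subrr //; lia.
set q1 := l1 h3 ha hr; set q2 := l2 h3 ha hr; set q3 := l3 h3 ha hr.
exists (subst3 q1 q2 q3); split; last first.
  by exists a; rewrite (l_sol h3 ha hr) -hesseE.
have [L1 L2 L3] := l_X h3 ha hr.
have [P1 P2 P3] := near1 L1 L2 L3.
split.
- by move=> g h; apply: sig_add.
- by move=> g h; apply: sig_mul.
- by rewrite -oneE sig_one.
- by move=> c g; rewrite -!C_scale; apply: sig_C.
- exact: sig_bij L1 L2 L3.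
Qed.
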